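(* Let $d\ge3$, $h\ge1$. The group $G(d,h)$ contains a subgroup isomorphic to $(\mathbb{Z}/d\mathbb{Z})^{(d-1)^h}$.
   Context: Let $\mathcal{T}(d,h)$ be the rooted tree in which the root $0$ has $d$ children, every vertex at distance $1,\dots,h-1$ from the root has $d-1$ children, and the vertices at distance $h$ are leaves. Let $V$ be its vertex set, $A$ its adjacency matrix, $\Delta := dI-A$, and $\Lambda\subset\mathbb{Z}^V$ the lattice spanned by the rows of $\Delta$. Then $G(d,h):=\mathbb{Z}^V/\Lambda$. *)

(* Defs.v *)
From mathcomp Require Import all_boot all_order all_algebra.
Set Implicit Arguments. Unset Strict Implicit. Unset Printing Implicit Defensive.
Import GRing.Theory.
Local Open Scope ring_scope.

(* Vertices of T(d,h): a vertex is encoded by its depth k (0 <= k <= h) and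
   the path of child choices from the root (positions 0..k-1); the root has
   d possible children (choice < d), every other internal vertex has d-1
   possible children (choice < d-1). Positions >= k are normalised to 0. *)
Definition valid_vertex (d h : nat) (x : 'I_h.+1 * {ffun 'I_h -> 'I_d}) : bool :=
  [forall i : 'I_h,
     if (i < x.1)%N then (x.2 i < (if i == 0%N :> nat then d else d.-1))%N
     else (x.2 i == 0%N :> nat)].

Definition tvertex (d h : nat) : finType :=
  {x : 'I_h.+1 * {ffun 'I_h -> 'I_d} | @valid_vertex d h x}.

Definition depth d h (v : tvertex d h) : nat := (val v).1.
Definition tpath d h (v : tvertex d h) : {ffun 'I_h -> 'I_d} := (val v).2.

Definition parent d h (u v : tvertex d h) : bool :=
  (depth v == (depth u).+1) &&
  [forall i : 'I_h, (i < depth u)%N ==> (tpath u i == tpath v i)].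

Definition tadj d h (u v : tvertex d h) : bool := parent u v || parent v u.

Definition ZV d h := {ffun tvertex d h -> int}.

Definition Delta_row d h (v : tvertex d h) : ZV d h :=
  [ffun w => (d * (v == w))%:Z - (tadj v w : nat)%:Z].

Definition in_lattice d h (x : ZV d h) : Prop :=
  exists c : {ffun tvertex d h -> int},
    x = [ffun w => \sum_(v : tvertex d h) c v * Delta_row v w].

(* "G(d,h) = Z^V/Lambda contains a subgroup isomorphic to the abelian group H":
   there is an injective group homomorphism H -> Z^V/Lambda, described by a
   lift phi : H -> Z^V (additive modulo Lambda, with trivial kernel mod Lambda). *)
Definition embeds_in_G (H : zmodType) d h : Prop :=
  exists phi : H -> ZV d h,
    (forall a b : H, in_lattice (phi (a + b) - phi a - phi b)) /\
    (forall a : H, in_lattice (phi a) -> a = 0).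

(* Main.v *)
Require Import Defs.
From mathcomp Require Import all_boot all_order all_algebra.
From mathcomp Require Import zify ring.
Set Implicit Arguments. Unset Strict Implicit. Unset Printing Implicit Defensive.
Import Order.TTheory GRing.Theory Num.Theory.

Section Tree.
Variables dd hh : nat.
Local Notation d := dd.+3.
Local Notation h := hh.+1.
Local Notation V := (tvertex d h).

Definition bnd (i : nat) : nat := if i == 0 then d else d.-1.

Lemma bnd_le i : bnd i <= d. Proof. by rewrite /bnd; case: ifP. Qed.

Definition pn (v : V) (i : nat) : nat := if i < h then nat_of_ord (tpath v (inord i)) else 0.

Lemma depth_le (v : V) : depth v <= h.
Proof. by rewrite /depth -ltnS ltn_ord. Qed.

Lemma validP (v : V) (i : 'I_h) :
  if i < depth v then tpath v i < bnd i else tpath v i == 0 :> nat.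
Proof. by have /forallP := valP v; move/(_ i). Qed.

Lemma pn_lt (v : V) i : i < depth v -> pn v i < bnd i.
Proof.
move=> hi; have hih : i < h by apply: leq_trans hi (depth_le v).
have := validP v (Ordinal hih); rewrite /pn hih /= hi.
by have -> : inord i = Ordinal hih by apply: val_inj; rewrite /= inordK.
Qed.

Lemma pn_ge (v : V) i : depth v <= i -> pn v i = 0.
Proof.
move=> hi; rewrite /pn; case: ifP => // hih.
have -> : inord i = Ordinal hih by apply: val_inj; rewrite /= inordK.
by have := validP v (Ordinal hih); rewrite /= ltnNge hi /= => /eqP.
Qed.

Lemma pnE (v : V) (i : 'I_h) : pn v i = tpath v i.
Proof. by rewrite /pn ltn_ord inord_val. Qed.

Lemma vertex_eq (u v : V) : depth u = depth v ->
  (forall i, i < depth u -> pn u i = pn v i) -> u = v.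
Proof.
move=> hd hp; apply: val_inj.
case: u v hd hp => [[ku pu] Hu] [[kv pv] Hv] /= hd hp.
rewrite /depth /= in hd hp.
congr pair; first exact: val_inj.
apply/ffunP => i; apply: val_inj.
have := hp i; rewrite /pn ltn_ord inord_val /=.
case: (ltnP i ku) => hik; first by move/(_ isT).
move=> _.
have /forallP /(_ i) := Hu; have /forallP /(_ i) := Hv.
rewrite /= -hd ltnNge hik /= => /eqP -> /eqP ->. done.
Qed.

Lemma root_valid : @valid_vertex d h (ord0, [ffun _ => ord0]).
Proof. apply/forallP => i /=. rewrite ffunE. done. Qed.

Definition root : V := Sub (ord0, [ffun _ => ord0]) root_valid.

Lemma depth_root : depth root = 0. Proof. by []. Qed.

Definition mkv (k : nat) (p : nat -> nat) : V :=
  insubd root (inord k, [ffun i : 'I_h => (if i < k then inord (p i) else ord0) : 'I_d]).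

Lemma mkvP k p : k <= h -> (forall i, i < k -> p i < bnd i) ->
  depth (mkv k p) = k /\ forall i, pn (mkv k p) i = if i < k then p i else 0.
Proof.
move=> hk hp.
have hv : @valid_vertex d h (inord k, [ffun i : 'I_h => (if i < k then inord (p i) else ord0) : 'I_d]).
  apply/forallP => i /=; rewrite inordK ?ltnS // ffunE.
  case: ifP => hi; rewrite hi //.
  by rewrite inordK; [apply: hp | apply: leq_trans (hp _ hi) (bnd_le _)].
have e := insubdK root hv.
split; first by rewrite /depth e /= inordK ?ltnS.
move=> i; rewrite /pn /tpath e /= ffunE.
case: ifP => hih; last first.
  by case: ifP => // hik; move: (leq_trans hik hk); rewrite hih.
rewrite inordK //; case: ifP => // hi.
by rewrite inordK //; apply: leq_trans (hp _ hi) (bnd_le _).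
Qed.


Definition anc (v : V) (k : nat) : V := mkv (minn k (depth v)) (pn v).

Lemma ancP (v : V) k : depth (anc v k) = minn k (depth v) /\
  forall i, pn (anc v k) i = if i < minn k (depth v) then pn v i else 0.
Proof.
apply: mkvP; first by apply: leq_trans (geq_minr _ _) (depth_le v).
move=> i hi; apply: pn_lt; apply: leq_trans hi (geq_minr _ _).
Qed.

Definition child (w : V) (j : nat) : V :=
  mkv (depth w).+1 (fun i => if i == depth w then j else pn w i).

Lemma childP w j : depth w < h -> j < bnd (depth w) ->
  depth (child w j) = (depth w).+1 /\
  forall i, pn (child w j) i =
    if i < (depth w).+1 then (if i == depth w then j else pn w i) else 0.
Proof.
move=> hw hj; apply: mkvP => // i hi.
case: eqP => [->//|ne]; apply: pn_lt.
by rewrite ltn_neqAle -ltnS hi andbT; apply/eqP.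
Qed.

Lemma parentP (u v : V) : reflect
  (depth v = (depth u).+1 /\ forall i, i < depth u -> pn u i = pn v i)
  (parent u v).
Proof.
apply: (iffP andP) => [[/eqP hd /forallP hp]|[hd hp]]; split => //.
- move=> i hi.
  have hih : i < h by apply: leq_trans (depth_le u); apply: leq_trans hi _.
  have := hp (Ordinal hih); rewrite /= hi /= => /eqP e.
  have := pnE u (Ordinal hih); have := pnE v (Ordinal hih); rewrite /= => -> ->.
  by rewrite e.
- by apply/eqP.
- apply/forallP => i; apply/implyP => hi.
  apply/eqP; apply: val_inj; rewrite /=.
  by have := pnE u i; have := pnE v i; move=> <- <-; rewrite hp.
Qed.

Lemma parent_anc (u v : V) : parent u v = (0 < depth v) && (u == anc v (depth v).-1).
Proof.
have [ha hpa] := ancP v (depth v).-1.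
apply/idP/idP.
- move/parentP => [hd hp]; rewrite hd /=; apply/eqP.
  have [ha' hpa'] := ancP v (depth u).
  have e : minn (depth u) (depth v) = depth u by apply/minn_idPl; rewrite hd.
  apply: vertex_eq; first by rewrite ha' e.
  move=> i hi; rewrite hpa' e hi; exact: hp.
- case/andP => h0 /eqP ->; apply/parentP; rewrite ha.
  have e : minn (depth v).-1 (depth v) = (depth v).-1.
    by apply/minn_idPl; apply: leq_pred.
  rewrite e prednK //; split => // i hi; rewrite hpa e hi //.
Qed.

Lemma parent_depth (u v : V) : parent u v -> depth v = (depth u).+1.
Proof. by case/parentP. Qed.

Lemma sum_parent_up (F : V -> int) (w : V) :
  (\sum_(v | parent v w) F v)%R = if 0 < depth w then F (anc w (depth w).-1) else 0%R.
Proof.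
case: ifP => hw.
- by apply: big_pred1 => v; rewrite parent_anc hw.
- by apply: big_pred0 => v; rewrite parent_anc hw.
Qed.

Lemma sum_parent_down (F : V -> int) (w : V) : depth w < h ->
  (\sum_(v | parent w v) F v = \sum_(j : 'I_d | (j < bnd (depth w))%N) F (child w j))%R.
Proof.
move=> hw.
rewrite (reindex_onto (fun j : 'I_d => child w j) (fun v => inord (pn v (depth w)))).
  apply: eq_bigl => j; apply/andP/idP.
  - case=> hp /eqP <-.
    have hlt : pn (child w j) (depth w) < bnd (depth w).
      by apply: pn_lt; rewrite (parent_depth hp).
    rewrite inordK //; exact: leq_trans hlt (bnd_le _).
  - move=> hj; have [hd hp] := childP hw hj; split.
    + apply/parentP; split => // i hi; rewrite hp ltnS ltnW // ifN //.
      by rewrite neq_ltn hi.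
    + by apply/eqP; apply: val_inj; rewrite /= hp ltnSn eqxx inordK.
move=> v hp; have [hd hpv] := parentP _ _ hp.
have hlt : pn v (depth w) < bnd (depth w) by apply: pn_lt; rewrite hd.
have hj : (inord (pn v (depth w)) : 'I_d) < bnd (depth w).
  by rewrite inordK //; exact: leq_trans hlt (bnd_le _).
have [hd' hp'] := childP hw hj.
apply: vertex_eq; first by rewrite hd' hd.
move=> i; rewrite hd' => hi; rewrite hp' hi; case: eqP => [->|ne].
  by rewrite inordK //; exact: leq_trans hlt (bnd_le _).
apply: hpv; rewrite ltnS in hi.
by rewrite ltn_neqAle hi andbT; apply/eqP.
Qed.

Lemma sum_parent_down0 (F : V -> int) (w : V) : depth w = h ->
  (\sum_(v | parent w v) F v)%R = 0%R.
Proof.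
move=> hw; apply: big_pred0 => v; apply/negP => /parent_depth hd.
by have := depth_le v; rewrite hd hw ltnn.
Qed.

Lemma sum_ind (P : pred V) (F : V -> int) :
  (\sum_v F v * (P v : nat)%:Z = \sum_(v | P v) F v)%R.
Proof.
by rewrite [RHS]big_mkcond; apply: eq_bigr => v _; case: (P v); rewrite ?mulr1 ?mulr0.
Qed.

Definition downsum (c : V -> int) (w : V) : int :=
  if depth w < h then (\sum_(j : 'I_d | (j < bnd (depth w))%N) c (child w j))%R else 0%R.
Definition upval (c : V -> int) (w : V) : int :=
  if 0 < depth w then c (anc w (depth w).-1) else 0%R.

Lemma DeltaE (c : V -> int) (w : V) :
  (\sum_v c v * Delta_row v w = d%:Z * c w - (upval c w + downsum c w))%R.
Proof.
have e : forall v, Delta_row v w = ((d * (v == w))%:Z - (parent v w : nat)%:Z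
                                   - (parent w v : nat)%:Z)%R.
  move=> v; rewrite ffunE /tadj -addrA -opprD -PoszD; congr (_ - Posz _)%R.
  case h1: (parent v w); case h2: (parent w v) => //=.
  have := parent_depth h1; rewrite (parent_depth h2) => /eqP.
  lia.
under eq_bigr do rewrite e !mulrBr.
rewrite !sumrB sum_ind sum_ind.
rewrite (bigD1 w) //= eqxx muln1 big1 ?addr0; last first.
  by move=> v /negbTE ->; rewrite muln0 mulr0.
rewrite sum_parent_up /upval /downsum opprD addrA [(c w * _)%R]mulrC.
congr (_ - _)%R.
case: ltnP => hw; first exact: sum_parent_down.
apply: sum_parent_down0; apply/eqP; rewrite eqn_leq hw depth_le //.
Qed.


Lemma sum_bound (F : nat -> int) b (K : int) : (b <= d)%N ->
  (forall j, (j < b)%N -> `|F j| <= K)%R ->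
  (`|\sum_(j : 'I_d | (j < b)%N) F j| <= Posz b * K)%R.
Proof.
move=> hb hF; apply: le_trans (ler_norm_sum _ _ _) _.
rewrite (big_ord_narrow hb).
apply: le_trans (ler_sum _ (G := fun _ => K) _) _ => [i _|]; first by apply: hF; rewrite /= ltn_ord.
by rewrite sumr_const card_ord -mulr_natl natz.
Qed.

Lemma Delta_inj (y : ZV d h) :
  (forall w, \sum_v y v * Delta_row v w = 0)%R -> forall v, y v = 0%R.
Proof.
move=> hy.
pose K v := (absz (y v) * h.+1 + depth v)%N.
case: (@arg_maxnP _ root predT K isT) => w _ hmax.
set M := absz (y w).
have hle : forall v, (absz (y v) <= M)%N.
  move=> v; have := hmax v isT; rewrite /K /= => hk.
  move: (depth_le w) => hdw; rewrite leqNgt; apply/negP => hlt.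
  have : (M.+1 * h.+1 <= absz (y v) * h.+1)%N by rewrite leq_mul2r hlt orbT.
  rewrite -/M in hk; move=> H; clear hmax; clearbody M; move: hk hlt H hdw; move: (depth v) (depth w) (absz (y v)) => a b c; lia.
have hch : forall j, (depth w < h)%N -> (j < bnd (depth w))%N ->
    (absz (y (child w j)) < M)%N.
  move=> j hw hj; have [hd _] := childP hw hj; have := hmax (child w j) isT.
  rewrite /K hd /= => hk.
  rewrite ltnNge; apply/negP => hlt.
  have : (M * h.+1 <= absz (y (child w j)) * h.+1)%N by rewrite leq_mul2r hlt orbT.
  rewrite -/M in hk; move=> H; clear hmax; clearbody M; move: hk H.
  move: (absz (y (child w j))) (depth w) => a b; lia.
have := hy w; rewrite DeltaE => /eqP; rewrite subr_eq0 => /eqP e.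
have hM : M = 0%N.
  apply/eqP; rewrite -leqn0 leqNgt; apply/negP => hM.
  have eN : ((d * M)%:Z = `|upval y w + downsum y w|)%R.
    by rewrite -e normrM PoszM abszE.
  have hup : (`|upval y w| <= (if (0 < depth w)%N then M else 0%N)%:Z)%R.
    rewrite /upval; case: ifP => _; last by rewrite normr0.
    by rewrite -abszE lez_nat hle.
  have hdown : (`|downsum y w| <=
      (if (depth w < h)%N then bnd (depth w) * M.-1 else 0%N)%:Z)%R.
    rewrite /downsum; case: ifP => hw; last by rewrite normr0.
    rewrite PoszM; apply: (sum_bound (F := fun j => y (child w j))) (bnd_le _) _ => j hj.
    by rewrite -abszE lez_nat -ltnS prednK // hch.
  have : (d * M <= (if (0 < depth w)%N then M else 0%N) +
      (if (depth w < h)%N then bnd (depth w) * M.-1 else 0%N))%N.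
    rewrite -lez_nat PoszD eN; apply: le_trans (ler_normD _ _) _.
    exact: lerD.
  clear hch hmax hle e hup hdown eN; move=> H; clearbody M.
  have [hw0|hw0] := posnP (depth w).
    by rewrite hw0 /= /bnd /= in H; nia.
  have [hwh|hwh] := ltnP (depth w) h.
    by rewrite hw0 hwh /bnd ifN ?lt0n_neq0 //= in H; nia.
  by rewrite hw0 ltnNge hwh /= in H; nia.
by move=> v; apply/eqP; rewrite -absz_eq0 -leqn0 -hM hle.
Qed.


Definition b2z (b : bool) : int := Posz (nat_of_bool b).

Lemma upvalE (c : V -> int) w : upval c w = (\sum_(v | parent v w) c v)%R.
Proof. by rewrite sum_parent_up. Qed.

Lemma downsumE (c : V -> int) w : downsum c w = (\sum_(v | parent w v) c v)%R.
Proof.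
rewrite /downsum; case: ltnP => hw; first by rewrite sum_parent_down.
by rewrite sum_parent_down0 //; apply/eqP; rewrite eqn_leq hw depth_le.
Qed.

Lemma sum_cnt b (x : int) : (b <= d)%N ->
  (\sum_(j : 'I_d | (j < b)%N) x)%R = (Posz b * x)%R.
Proof.
by move=> hb; rewrite (big_ord_narrow hb) sumr_const card_ord -mulr_natl natz.
Qed.

Lemma nchildren (w : V) (x : int) :
  (\sum_(v | parent w v) x)%R = (Posz (if (depth w < h)%N then bnd (depth w) else 0%N) * x)%R.
Proof.
rewrite -downsumE /downsum; case: ifP => hw; last by rewrite mul0r.
by rewrite sum_cnt // bnd_le.
Qed.

Lemma sum_is1 (w u : V) :
  (\sum_(v | parent w v) b2z (v == u))%R = b2z (parent w u).
Proof.
case hp: (parent w u).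
  rewrite (bigD1 u) //= eqxx big1 ?addr0 // => v /andP [_ /negbTE ->] //.
by rewrite big1 // => v hv; case: eqP hv => // ->; rewrite hp.
Qed.

Lemma anc_id (v : V) : anc v (depth v) = v.
Proof.
have [ha hp] := ancP v (depth v); rewrite minnn in ha hp.
apply: vertex_eq => // i; rewrite ha => hi; by rewrite hp hi.
Qed.

Lemma anc_anc (v : V) k k' : (k' <= k)%N -> anc (anc v k) k' = anc v k'.
Proof.
move=> hk; have [ha hp] := ancP v k; have [ha' hp'] := ancP (anc v k) k'.
have [ha2 hp2] := ancP v k'.
have e : minn k' (depth (anc v k)) = minn k' (depth v).
  by rewrite ha; lia.
apply: vertex_eq; first by rewrite ha' e ha2.
move=> i; rewrite ha' e => hi; rewrite hp' e hi hp hp2 hi.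
have -> : (i < minn k (depth v))%N by lia.
done.
Qed.

Definition desc (u v : V) : bool := (depth u <= depth v)%N && (anc v (depth u) == u).

Lemma desc_refl (u : V) : desc u u.
Proof. by rewrite /desc leqnn anc_id eqxx. Qed.

Lemma desc_le (u v : V) : desc u v -> (depth u <= depth v)%N.
Proof. by case/andP. Qed.

Lemma desc_lt (u v : V) : desc u v -> v != u -> (depth u < depth v)%N.
Proof.
case/andP => hle /eqP ha hne; rewrite ltn_neqAle hle andbT.
apply: contraNneq hne => e; by rewrite -ha e anc_id.
Qed.

Lemma desc_up (u w : V) : (0 < depth w)%N ->
  desc u (anc w (depth w).-1) = desc u w && (w != u).
Proof.
move=> hw; have [ha _] := ancP w (depth w).-1.
have e : minn (depth w).-1 (depth w) = (depth w).-1 by lia.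
rewrite e in ha; rewrite /desc ha.
case: (ltngtP (depth u) (depth w)) => hc.
- rewrite anc_anc; last by lia.
  have -> : (depth u <= (depth w).-1)%N by lia.
  rewrite /=; case: eqP => // <-; apply/esym/eqP => ew.
  have := ancP w (depth u); rewrite -ew; case => hd _; lia.
- have -> : (depth u <= (depth w).-1)%N = false by lia.
  by [].
- have -> : (depth u <= (depth w).-1)%N = false by lia.
  by rewrite /= hc anc_id andbN.
Qed.

Lemma desc_child (u w v : V) : parent w v -> desc u v = desc u w || (v == u).
Proof.
rewrite parent_anc => /andP [hv /eqP ->].
rewrite desc_up //; case: eqP => [->|_]; rewrite ?desc_refl ?andbT ?orbT ?orbF //.
Qed.


Definition Ev (u v : V) : int := b2z (desc u v && ~~ odd (depth v - depth u)).
Definition Ov (u v : V) : int := b2z (desc u v && odd (depth v - depth u)).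

Lemma up_E u w : upval (Ev u) w = Ov u w.
Proof.
rewrite /upval /Ov /Ev; case: posnP => hw.
  case hd: (desc u w) => //=; have := desc_le hd; rewrite hw leqn0 => /eqP ->.
  by [].
rewrite desc_up //; have [ha _] := ancP w (depth w).-1; rewrite ha.
have -> : minn (depth w).-1 (depth w) = (depth w).-1 by lia.
case hd: (desc u w) => //=; case: eqP => [->|ne] /=; first by rewrite subnn.
have hlt := desc_lt hd (introN eqP ne).
have -> : (depth w - depth u = ((depth w).-1 - depth u).+1)%N by lia.
by rewrite oddS.
Qed.

Lemma child_parent w j : (depth w < h)%N -> (j < bnd (depth w))%N -> parent w (child w j).
Proof.
move=> hw hj; have [hd hp] := childP hw hj.
apply/parentP; split => // i hi; rewrite hp ltnS ltnW // ifN //.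
by rewrite neq_ltn hi.
Qed.

Lemma par_child w j : (depth w < h)%N -> (j < bnd (depth w))%N ->
  anc (child w j) (depth w) = w.
Proof.
move=> hw hj; have := child_parent hw hj; rewrite parent_anc => /andP [_ /eqP e].
have [hd _] := childP hw hj; by rewrite {3}e hd.
Qed.

Lemma down_E u (hu : ~~ odd (h - depth u)) w :
  downsum (Ev u) w = (Posz (d.-1) * Ov u w + b2z (parent w u))%R.
Proof.
rewrite downsumE /Ov.
case hdw: (desc u w).
- have hpf : parent w u = false.
    apply/negP => /parent_depth; have := desc_le hdw; lia.
  rewrite hpf addr0 /=.
  under eq_bigr => v hv do rewrite /Ev (desc_child _ hv) hdw /= (parent_depth hv).
  rewrite nchildren.
  have hle := desc_le hdw.
  have -> : (~~ odd ((depth w).+1 - depth u)) = odd (depth w - depth u).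
    by rewrite subSn // oddS negbK.
  case ho: (odd (depth w - depth u)); last by rewrite !mulr0.
  have hwh : (depth w < h)%N.
    rewrite ltn_neqAle depth_le andbT; apply: contraNneq hu => e.
    by move: ho; rewrite e.
  rewrite hwh /bnd ifN //; apply: contraTneq ho => e; rewrite e.
  by have -> : depth u = 0%N by lia.
- rewrite /= mulr0 add0r -sum_is1; apply: eq_bigr => v hv.
  rewrite /Ev (desc_child _ hv) hdw /=; case: eqP => // ->.
  by rewrite subnn.
Qed.

Lemma nb_E u (hu : ~~ odd (h - depth u)) w :
  (upval (Ev u) w + downsum (Ev u) w = Posz d * Ov u w + b2z (parent w u))%R.
Proof.
rewrite up_E down_E; lia.
Qed.


Definition sib (u : V) : V := child (anc u (depth u).-1) 0.

Lemma sibP u : (0 < depth u)%N ->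
  depth (sib u) = depth u /\ forall w, parent w (sib u) = parent w u.
Proof.
move=> hu; have [ha _] := ancP u (depth u).-1.
have e : minn (depth u).-1 (depth u) = (depth u).-1 by lia.
rewrite e in ha.
have hw : (depth (anc u (depth u).-1) < h)%N by rewrite ha; have := depth_le u; lia.
have hj : (0 < bnd (depth (anc u (depth u).-1)))%N by rewrite /bnd; case: ifP.
have [hd _] := childP hw hj.
have hpc := par_child hw hj.
rewrite ha in hpc hd.
rewrite /sib hd prednK; last exact: hu.
split; first by [].
move=> w; rewrite !parent_anc hd prednK; last exact: hu.
by rewrite hu /= hpc.
Qed.

Definition upval_sub (f g : V -> int) w :
  upval (fun v => f v - g v)%R w = (upval f w - upval g w)%R.
Proof. by rewrite /upval; case: ifP; rewrite ?subr0. Qed.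

Definition downsum_sub (f g : V -> int) w :
  downsum (fun v => f v - g v)%R w = (downsum f w - downsum g w)%R.
Proof. by rewrite !downsumE sumrB. Qed.

Definition cvec (u : V) (v : V) : int :=
  if (0 < depth u)%N then (Ev u v - Ev (sib u) v)%R else Ev u v.
Definition xvec (u : V) (v : V) : int :=
  if (0 < depth u)%N then ((Ev u v - Ov u v) - (Ev (sib u) v - Ov (sib u) v))%R
  else (Ev u v - Ov u v)%R.

Lemma Delta_cvec u (hu : ~~ odd (h - depth u)) w :
  (\sum_v cvec u v * Delta_row v w = Posz d * xvec u w)%R.
Proof.
rewrite DeltaE /cvec /xvec; case: posnP => hu0.
  have -> : (fun v => Ev u v) = Ev u by [].
  rewrite nb_E; last exact: hu.
  have -> : parent w u = false by apply/negP => /parent_depth; lia.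
  by rewrite /= addr0 mulrBr.
have [hs hps] := sibP hu0.
rewrite upval_sub downsum_sub.
have e1 := nb_E hu w.
have hs' : ~~ odd (h - depth (sib u)) by rewrite hs.
have e2 := nb_E hs' w.
rewrite hps in e2.
have -> : (upval (Ev u) w - upval (Ev (sib u)) w + (downsum (Ev u) w - downsum (Ev (sib u)) w)
  = (upval (Ev u) w + downsum (Ev u) w) - (upval (Ev (sib u)) w + downsum (Ev (sib u)) w))%R.
  by rewrite addrACA opprD.
rewrite e1 e2.
move: (Ev u w) (Ev (sib u) w) (Ov u w) (Ov (sib u) w) (b2z (parent w u)) => a b c e f.
lia.
Qed.


Lemma layer (g : V -> int) k : (k < h)%N ->
  (\sum_(v | depth v == k.+1) g v =
   \sum_(w | depth w == k) \sum_(j : 'I_d | (j < bnd k)%N) g (child w j))%R.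
Proof.
move=> hk.
have e1 : forall v, depth v == k.+1 -> g v = (\sum_(w | parent w v) g v)%R.
  move=> v /eqP hv; rewrite (sum_parent_up (fun _ => g v)) hv //.
rewrite (eq_bigr _ e1).
rewrite (exchange_big_dep (fun w => depth w == k)) /=; last first.
  by move=> v w /eqP hv /parent_depth; rewrite hv => -[->].
apply: eq_bigr => w /eqP hw.
rewrite -hw -sum_parent_down; last by rewrite hw.
apply: eq_bigl => v; apply/andP/idP => [[] //|hp]; split => //.
by rewrite (parent_depth hp) hw.
Qed.

Lemma root_uniq (v : V) : depth v = 0%N -> v = root.
Proof. by move=> hv; apply: vertex_eq => // i; rewrite hv. Qed.

Definition Lk k : int := (\sum_(v : V | depth v == k) 1)%R.

Lemma Lk0 : Lk 0 = 1%R.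
Proof.
rewrite /Lk (big_pred1 root) // => v /=; apply/eqP/eqP => [/root_uniq|->] //.
Qed.

Lemma LkS k : (k < h)%N -> Lk k.+1 = (Lk k * Posz (bnd k))%R.
Proof.
move=> hk; rewrite /Lk layer // mulr_suml; apply: eq_bigr => w _.
by rewrite sum_cnt ?bnd_le // mulr1 mul1r.
Qed.

Lemma sum_nz b : (0 < b)%N -> (b <= d)%N ->
  (\sum_(j : 'I_d | (j < b)%N) b2z (j != 0%N :> nat))%R = Posz b.-1.
Proof.
move=> hb hbd; rewrite (big_ord_narrow hbd).
case: b hb hbd => // b _ hbd; rewrite big_ord_recl /= add0r.
rewrite (eq_bigr (fun _ => 1%R)); last by move=> i _.
by rewrite /= sumr_const card_ord -mulr_natl natz mulr1.
Qed.

Lemma SkS k : (k < h)%N ->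
  (\sum_(v : V | depth v == k.+1) b2z (pn v k != 0%N))%R = (Lk k * Posz (bnd k).-1)%R.
Proof.
move=> hk; rewrite /Lk layer // mulr_suml; apply: eq_bigr => w /eqP hw.
rewrite mul1r -sum_nz ?bnd_le //; last by rewrite /bnd; case: ifP.
apply: eq_bigr => j hj.
rewrite -hw in hj hk; have [_ hp] := childP hk hj.
by rewrite hp hw ltnSn eqxx.
Qed.


Lemma Lk_closed k : (k <= h)%N ->
  Lk k = if k == 0%N then 1%R else (Posz d * (Posz d.-1) ^+ k.-1)%R.
Proof.
elim: k => [|k IH] hk; first exact: Lk0.
rewrite LkS // IH ?(ltnW hk) //; case: k {IH hk} => [|k] /=.
  by rewrite mul1r /bnd /= expr0 mulr1.
by rewrite /bnd /= -mulrA -exprSr.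
Qed.

Definition sc (k : nat) : int :=
  match k with
  | 0 => 1
  | 1 => Posz d.-1
  | k'.+2 => Posz d * (Posz d.-1) ^+ k' * Posz d.-2
  end%R.

Definition inS (u : V) : bool :=
  ~~ odd (h - depth u) && ((depth u == 0%N) || (pn u (depth u).-1 != 0%N)).

Lemma b2zA a b : b2z (a && b) = (b2z a * b2z b)%R.
Proof. by case: a; case: b; rewrite /b2z /= ?mulr0 ?mul0r ?mulr1. Qed.

Lemma Tk k : (k <= h)%N ->
  (\sum_(v : V | depth v == k) b2z (inS v))%R = (b2z (~~ odd (h - k)) * sc k)%R.
Proof.
case: k => [|k] hk.
  rewrite (eq_bigr (fun _ => 1 * b2z (~~ odd (h - 0))))%R; last first.
    by move=> v /eqP hv; rewrite /inS hv eqxx andbT mul1r.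
  by rewrite -mulr_suml -/(Lk 0) Lk0 mul1r mulr1.
rewrite (eq_bigr (fun v => b2z (~~ odd (h - k.+1)) * b2z (pn v k != 0%N))%R); last first.
  by move=> v /eqP hv; rewrite /inS hv /= b2zA.
rewrite -mulr_sumr SkS // Lk_closed ?(ltnW hk) //; congr (_ * _)%R.
case: k {hk} => [|k] /=; first by rewrite mul1r /bnd.
by rewrite /bnd /=.
Qed.

Definition scP n := (\sum_(0 <= k < n.+1) b2z (~~ odd (n - k)) * sc k)%R = (Posz d.-1 ^+ n)%R.

Lemma sc_sum2 n : scP n /\ scP n.+1.
Proof.
rewrite /scP; elim: n => [|n [IH1 IH2]].
  split; first by rewrite big_nat1 /= mul1r expr0.
  by rewrite big_nat_recr //= big_nat1 /= mul0r add0r mul1r expr1.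
split => //.
rewrite big_nat_recr // big_nat_recr //= subnn subSnn /= mul0r addr0 mul1r.
rewrite (eq_big_nat _ _ (F2 := fun k => b2z (~~ odd (n - k)) * sc k)%R); last first.
  by move=> k /andP [_ hk]; rewrite !subSn ?(ltnW hk) // ?leqW //; rewrite /= negbK.
rewrite IH1 !exprS; move: (Posz d.-1 ^+ n)%R => X.
lia.
Qed.

Lemma sc_sum n : scP n.
Proof. by case: (sc_sum2 n). Qed.


Lemma card_S : #|[pred u : V | inS u]| = ((d - 1) ^ h)%N.
Proof.
apply/eqP; rewrite -(eqr_nat int) natrX -sumr_const; apply/eqP.
rewrite (partition_big (fun v : V => (val v).1) predT) //=.
rewrite (eq_bigr (fun j : 'I_h.+1 => \sum_(v : V | depth v == j) b2z (inS v)))%R;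
  last first.
  move=> j _; rewrite big_mkcond [RHS]big_mkcond; apply: eq_bigr => v _.
  have -> : ((val v).1 == j) = (depth v == j) by [].
  by rewrite !inE; case: (inS v); case: (depth v == j).
rewrite (eq_bigr (fun j : 'I_h.+1 => b2z (~~ odd (h - j)) * sc j))%R; last first.
  by move=> j _; rewrite Tk // -ltnS.
rewrite -(big_mkord xpredT (fun j => b2z (~~ odd (h - j)) * sc j)%R) sc_sum.
by rewrite natz.
Qed.


Lemma desc_eqdepth (a b : V) : desc a b -> (depth b <= depth a)%N -> b = a.
Proof.
case/andP => hle /eqP ha hge.
have e : depth a = depth b by apply/eqP; rewrite eqn_leq hle hge.
by rewrite -ha e anc_id.
Qed.

Lemma pn_sib (v : V) : (0 < depth v)%N -> pn (sib v) (depth v).-1 = 0%N.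
Proof.
move=> hv; have [ha _] := ancP v (depth v).-1.
have e : minn (depth v).-1 (depth v) = (depth v).-1 by lia.
rewrite e in ha.
have hw : (depth (anc v (depth v).-1) < h)%N by rewrite ha; have := depth_le v; lia.
have hj : (0 < bnd (depth (anc v (depth v).-1)))%N by rewrite /bnd; case: ifP.
have [_ hp] := childP hw hj.
rewrite /sib hp ha ltnSn eqxx; done.
Qed.

Lemma sib_ne (u : V) : inS u -> (0 < depth u)%N -> desc (sib u) u = false.
Proof.
move=> hS hu; apply/negP => hd.
have [hs _] := sibP hu.
have e := desc_eqdepth hd (eq_leq (esym hs)).
have hp : pn u (depth u).-1 = 0%N by rewrite {1}e pn_sib.
have hu0 : (depth u == 0%N) = false by lia.
by move: hS; rewrite /inS hp hu0 eqxx /= andbF.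
Qed.

Lemma cvec_tri (u v : V) : inS u -> inS v -> (depth u <= depth v)%N -> v != u ->
  cvec v u = 0%R.
Proof.
move=> hSu hSv hle hne; rewrite /cvec.
have hEv : Ev v u = 0%R.
  rewrite /Ev; case hd: (desc v u) => //=.
  by move: hne; rewrite (desc_eqdepth hd hle) eqxx.
case: posnP => hv; first exact: hEv.
rewrite hEv /Ev; case hd: (desc (sib v) u) => //=.
have [hs _] := sibP hv.
have hle' : (depth u <= depth (sib v))%N by rewrite hs.
have e := desc_eqdepth hd hle'.
have hp : pn u (depth u).-1 = 0%N by rewrite e hs pn_sib.
have hu0 : (depth u == 0%N) = false by rewrite e hs; lia.
by move: hSu; rewrite /inS hp hu0 eqxx /= andbF.
Qed.

Lemma cvec_diag (u : V) : inS u -> cvec u u = 1%R.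
Proof.
move=> hS; rewrite /cvec /Ev desc_refl subnn /=.
case: posnP => hu //.
by rewrite sib_ne.
Qed.


Theorem main_sec : embeds_in_G {ffun 'I_((d - 1) ^ h) -> 'Z_d} d h.
Proof.
set N := ((d - 1) ^ h)%N.
set es := enum [pred u : V | inS u].
have hsz : size es = N by rewrite -cardE card_S.
pose io (i : 'I_N) := nth root es i.
have hS : forall i, inS (io i).
  move=> i; have hi : (i < size es)%N by rewrite hsz ltn_ord.
  by have := mem_nth root hi; rewrite mem_enum.
have hinj : forall i j, io i = io j -> i = j.
  move=> i j e; apply: val_inj; apply/eqP.
  have hi : (i < size es)%N by rewrite hsz ltn_ord.
  have hj : (j < size es)%N by rewrite hsz ltn_ord.
  by rewrite -(nth_uniq root hi hj (enum_uniq _)); apply/eqP.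
have hpar : forall i, ~~ odd (h - depth (io i)) by move=> i; case/andP: (hS i).
have DC : forall i w, (\sum_v cvec (io i) v * Delta_row v w = Posz d * xvec (io i) w)%R.
  by move=> i w; apply: Delta_cvec.
pose phi (a : {ffun 'I_N -> 'Z_d}) : ZV d h :=
  [ffun w => \sum_(i : 'I_N) Posz (a i) * xvec (io i) w]%R.
exists phi; split.
- move=> a b.
  exists [ffun v => \sum_(i : 'I_N) (- Posz ((a i + b i) %/ d)%N) * cvec (io i) v]%R.
  apply/ffunP => w; rewrite !ffunE.
  under [RHS]eq_bigr do rewrite ffunE mulr_suml.
  rewrite exchange_big /=.
  rewrite [RHS](eq_bigr (fun i => (- Posz ((a i + b i) %/ d)%N) * (Posz d * xvec (io i) w)))%R;
    last first.
    move=> i _; rewrite -DC mulr_sumr; apply: eq_bigr => v _; by rewrite mulrA.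
  rewrite -!sumrB; apply: eq_bigr => i _.
  rewrite ffunE.
  have -> : nat_of_ord (a i + b i)%R = ((a i : nat) + b i) %% d by [].
  rewrite -!mulrBl mulrA; congr (_ * _)%R.
  have := divn_eq (a i + b i) d.
  move: (nat_of_ord (a i)) (nat_of_ord (b i)) => x y.
  move: ((x + y) %/ d)%N ((x + y) %% d)%N => q r e.
  rewrite mulNr -PoszM; lia.
- move=> a [c hc].
  have hy : forall v, (\sum_(i : 'I_N) Posz (a i) * cvec (io i) v - Posz d * c v = 0)%R.
    pose y : ZV d h := [ffun v => \sum_(i : 'I_N) Posz (a i) * cvec (io i) v - Posz d * c v]%R.
    move=> v; have := @Delta_inj y _ v; rewrite ffunE; apply => w.
    have hw := congr1 (fun f : ZV d h => f w) hc; rewrite /= !ffunE in hw.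
    under eq_bigr do rewrite ffunE mulrBl mulr_suml.
    rewrite sumrB exchange_big /=.
    rewrite (eq_bigr (fun i => Posz (a i) * (Posz d * xvec (io i) w)))%R; last first.
      move=> i _; rewrite -DC mulr_sumr; apply: eq_bigr => v' _; by rewrite mulrA.
    rewrite (eq_bigr (fun v' => Posz d * (c v' * Delta_row v' w)))%R; last first.
      by move=> v' _; rewrite mulrA.
    rewrite -mulr_sumr -hw mulr_sumr; apply/eqP; rewrite subr_eq0; apply/eqP.
    by apply: eq_bigr => i _; rewrite mulrCA.
  have hdv : forall v, (Posz d %| (\sum_(i : 'I_N) Posz (a i) * cvec (io i) v)%R)%Z.
    move=> v; move/eqP: (hy v); rewrite subr_eq0 => /eqP ->.
    by apply: dvdz_mulr; apply: dvdzz.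
  have hall : forall n i, (depth (io i) < n)%N -> (Posz d %| Posz (a i))%Z.
    elim=> [|n IH] i hi; first by [].
    have := hdv (io i); rewrite (bigD1 i) //= cvec_diag // mulr1.
    have hrest : (Posz d %| (\sum_(j < N | j != i) Posz (a j) * cvec (io j) (io i))%R)%Z.
      apply: rpred_sum => j hj.
      case: (ltnP (depth (io j)) (depth (io i))) => hlt.
        by apply: dvdz_mulr; apply: IH; lia.
      rewrite cvec_tri // ?mulr0 ?dvdz0 //.
      by apply: contra hj => /eqP /hinj ->.
    by rewrite (rpredDr _ hrest).
  apply/ffunP => i; rewrite ffunE; apply: val_inj => /=.
  have := hall (depth (io i)).+1 i (ltnSn _).
  rewrite dvdzE /= /dvdn modn_small ?ltn_ord //.
  by move/eqP.
Qed.


End Tree.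

Theorem lemma6p6 (d h : nat) (hd : (3 <= d)%N) (hh : (1 <= h)%N) :
  embeds_in_G {ffun 'I_((d - 1) ^ h) -> 'Z_d} d h.
Proof.
case: d hd => [|[|[|dd]]] // _; case: h hh => // hh _.
exact: main_sec.
Qed.
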